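(* Let $\mathbf{b}\in H_{1,2,2}$ be primary. If $\mathbf{b}-1\in I$, then $\overline{\mathbf{b}}$ is primary. If $\mathbf{b}-(1+2\mathbf{v}_3)\in I$, then $-\overline{\mathbf{b}}$ is primary.
   Context: Let $\mathbf{i},\mathbf{j},\mathbf{k}$ be the standard quaternion units; $\overline{\mathbf{q}}=q_1-q_2\mathbf{i}-q_3\mathbf{j}-q_4\mathbf{k}$ is the conjugate of $\mathbf{q}=q_1+q_2\mathbf{i}+q_3\mathbf{j}+q_4\mathbf{k}$. $H_{1,2,2}$ is the subring of the quaternions equal to the $\mathbb{Z}$-module generated by $\mathbf{v}_1=1$, $\mathbf{v}_2=\mathbf{i}$, $\mathbf{v}_3=\tfrac12(1+\mathbf{i}+\sqrt2\,\mathbf{j})$, $\mathbf{v}_4=\tfrac12(1+\mathbf{i}+\sqrt2\,\mathbf{k})$, closed under conjugation. Let $I = 2(1+\mathbf{i})H_{1,2,2}$ (equal to $H_{1,2,2}\,2(1+\mathbf{i})$). An element $\mathbf{q}\in H_{1,2,2}$ is primary if $\mathbf{q}-1\in I$ or $\mathbf{q}-(1+2\mathbf{v}_3)\in I$. *)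

(* Defs.v *)
From Stdlib Require Import Reals ZArith.
Open Scope R_scope.

Record quat := Quat { q1 : R; q2 : R; q3 : R; q4 : R }.

Definition qadd (p q : quat) : quat :=
  Quat (q1 p + q1 q) (q2 p + q2 q) (q3 p + q3 q) (q4 p + q4 q).
Definition qopp (p : quat) : quat := Quat (- q1 p) (- q2 p) (- q3 p) (- q4 p).
Definition qsub (p q : quat) : quat := qadd p (qopp q).
Definition qscale (r : R) (p : quat) : quat :=
  Quat (r * q1 p) (r * q2 p) (r * q3 p) (r * q4 p).
(* Hamilton product: i^2 = j^2 = k^2 = ijk = -1 *)
Definition qmul (p q : quat) : quat :=
  Quat (q1 p * q1 q - q2 p * q2 q - q3 p * q3 q - q4 p * q4 q)
       (q1 p * q2 q + q2 p * q1 q + q3 p * q4 q - q4 p * q3 q)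
       (q1 p * q3 q - q2 p * q4 q + q3 p * q1 q + q4 p * q2 q)
       (q1 p * q4 q + q2 p * q3 q - q3 p * q2 q + q4 p * q1 q).
Definition qconj (p : quat) : quat := Quat (q1 p) (- q2 p) (- q3 p) (- q4 p).

Definition qone : quat := Quat 1 0 0 0.
Definition qi : quat := Quat 0 1 0 0.

(* the Z-basis of H_{1,2,2} *)
Definition v1 : quat := qone.
Definition v2 : quat := qi.
Definition v3 : quat := Quat (1/2) (1/2) (sqrt 2 / 2) 0.
Definition v4 : quat := Quat (1/2) (1/2) 0 (sqrt 2 / 2).

Definition inH (q : quat) : Prop :=
  exists a b c d : Z,
    q = qadd (qadd (qscale (IZR a) v1) (qscale (IZR b) v2))
             (qadd (qscale (IZR c) v3) (qscale (IZR d) v4)).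

Definition gen2 : quat := qscale 2 (qadd qone qi).
Definition inI (q : quat) : Prop := exists h : quat, inH h /\ q = qmul gen2 h.

Definition c3 : quat := qadd qone (qscale 2 v3).

Definition primary (q : quat) : Prop :=
  inH q /\ (inI (qsub q qone) \/ inI (qsub q c3)).

(* Main.v *)
Require Import Defs.
From Stdlib Require Import Reals ZArith Lra.
Open Scope R_scope.

Lemma quat_eq x1 x2 x3 x4 y1 y2 y3 y4 :
  x1 = y1 -> x2 = y2 -> x3 = y3 -> x4 = y4 -> Quat x1 x2 x3 x4 = Quat y1 y2 y3 y4.
Proof. intros; subst; reflexivity. Qed.

Ltac unf := unfold qadd, qsub, qopp, qscale, qmul, qconj, qone, qi, gen2, c3, v1, v2, v3, v4 in *; simpl in *.

Lemma conjH q : inH q -> inH (qconj q).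
Proof.
  intros [a [b [c [d H]]]]; subst q.
  exists (a+c+d)%Z, (-b)%Z, (-c)%Z, (-d)%Z.
  unf; rewrite ?plus_IZR, ?opp_IZR; apply quat_eq; lra.
Qed.

Lemma oppconjH q : inH q -> inH (qopp (qconj q)).
Proof.
  intros [a [b [c [d H]]]]; subst q.
  exists (-a-c-d)%Z, b, c, d.
  unf; rewrite ?plus_IZR, ?minus_IZR, ?opp_IZR; apply quat_eq; lra.
Qed.

Theorem lemma16 : forall b : quat, primary b ->
  (inI (qsub b qone) -> primary (qconj b)) /\
  (inI (qsub b c3) -> primary (qopp (qconj b))).
Proof.
  intros b [Hb _]; split; intros [h [[a [b' [c [d Hh]]]] E]]; subst h;
    destruct b as [x1 x2 x3 x4].
  - split; [apply conjH; exact Hb|]. left.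
    exists (qadd (qadd (qscale (IZR (-b')) v1) (qscale (IZR (-a)) v2))
             (qadd (qscale (IZR (-c)) v3) (qscale (IZR (-d)) v4))).
    split; [do 4 eexists; reflexivity|].
    unf. injection E; intros. rewrite ?opp_IZR; apply quat_eq; simpl; lra.
  - split; [apply oppconjH; exact Hb|]. right.
    exists (qadd (qadd (qscale (IZR (b'-1)) v1) (qscale (IZR (a+1)) v2))
             (qadd (qscale (IZR c) v3) (qscale (IZR d) v4))).
    split; [do 4 eexists; reflexivity|].
    unf. injection E; intros. rewrite ?plus_IZR, ?minus_IZR; apply quat_eq; simpl; lra.
Qed.
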